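(* Let $\Delta$ be a local derivation of $\mathcal{S}$ such that $\Delta(L_1)=0$ and $\Delta(G_1)=aG_1$ for some $a\in\mathbb{C}$. Then $\Delta(G_1)=0$.
   Context: $\mathcal{S}$ is the centerless super Virasoro algebra: the Lie superalgebra over $\mathbb{C}$ with basis $\{L_m,G_n: m,n\in\mathbb{Z}\}$, $L_m$ even, $G_n$ odd, and brackets $[L_m,L_n]=(m-n)L_{m+n}$, $[L_m,G_r]=(\frac m2-r)G_{m+r}$, $[G_r,G_s]=2L_{r+s}$. A homogeneous linear map $D$ of parity $|D|$ is a derivation if $D([x,y])=[D(x),y]+(-1)^{|D||x|}[x,D(y)]$ for homogeneous $x,y$; derivations are sums of even and odd ones. A linear map $\Delta:\mathcal{S}\to\mathcal{S}$ is a local derivation if for every $x$ there is a derivation $D_x$ with $\Delta(x)=D_x(x)$. *)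

(* Defs.v *)
(* The centerless super Virasoro algebra S is the free C-module with basis
   indexed by bool * int: (false, m) = L_m (even), (true, r) = G_r (odd),
   realised as finitely supported functions (multinomials' monalg). *)
From HB Require Import structures.
From mathcomp Require Import all_boot all_order all_algebra.
From mathcomp Require Import finmap.
From mathcomp.multinomials Require Import monalg.
From mathcomp Require Import complex.
From mathcomp Require Import Rstruct.
From Stdlib Require Import Reals.

Set Implicit Arguments.
Unset Strict Implicit.
Unset Printing Implicit Defensive.

Import GRing.Theory Num.Theory.
Local Open Scope ring_scope.


Definition SVidx : choiceType := (bool * int)%type.

Definition SV : lmodType (complex Rdefinitions.R) :=
  {malg (complex Rdefinitions.R)[SVidx]}.

Definition Lb (m : int) : SV := << (false, m) >>.
Definition Gb (r : int) : SV := << (true, r) >>.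

Definition halfz (m : int) : complex Rdefinitions.R := m%:~R / 2%:R.

Definition brb (k l : SVidx) : SV :=
  match k, l with
  | (false, m), (false, n) => (m - n)%:~R *: Lb (m + n)
  | (false, m), (true, r)  => (halfz m - r%:~R) *: Gb (m + r)
  | (true, r),  (false, m) => - ((halfz m - r%:~R) *: Gb (m + r))
  | (true, r),  (true, s)  => 2%:R *: Lb (r + s)
  end.

Definition br (x y : SV) : SV :=
  \sum_(k <- msupp x) \sum_(l <- msupp y) ((x@_k * y@_l) *: brb k l).

Definition homog (b : bool) (x : SV) : Prop :=
  forall k : SVidx, k.1 != b -> x@_k = 0.

Definition hderivation (d : bool) (D : {linear SV -> SV}) : Prop :=
  (forall (b : bool) (x : SV), homog b x -> homog (addb d b) (D x)) /\
  (forall (bx by_ : bool) (x y : SV), homog bx x -> homog by_ y ->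
     D (br x y) = br (D x) y + (- 1) ^+ (d && bx) *: br x (D y)).

Definition derivation (D : {linear SV -> SV}) : Prop :=
  exists D0 D1 : {linear SV -> SV},
    hderivation false D0 /\ hderivation true D1 /\
    forall x, D x = D0 x + D1 x.

Definition local_derivation (Delta : {linear SV -> SV}) : Prop :=
  forall x : SV, exists D : {linear SV -> SV}, derivation D /\ Delta x = D x.

(* Main.v *)
Require Import Defs.
From HB Require Import structures.
From mathcomp Require Import all_boot all_order all_algebra finmap.
From mathcomp.multinomials Require Import monalg.
From mathcomp Require Import complex Rstruct.
From mathcomp Require Import ring.
Import GRing.Theory Num.Theory.
Local Open Scope ring_scope.

Notation C := (complex Rdefinitions.R).

Definition cb (k l : SVidx) : C :=
  match k, l with
  | (false, m), (false, n) => (m - n)%:~R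
  | (false, m), (true, r)  => halfz m - r%:~R
  | (true, r),  (false, m) => - (halfz m - r%:~R)
  | (true, r),  (true, s)  => 2%:R
  end.

Definition bv (k : SVidx) : SV := << k >>.
Definition idx (k l : SVidx) : SVidx := (addb k.1 l.1, k.2 + l.2).
Lemma brbE k l : brb k l = cb k l *: bv (idx k l).
Proof. case: k l => [[] m] [[] n]; rewrite /brb /cb /idx /bv /Lb /Gb; cbn [fst snd addb negb]; rewrite ?scaleNr; try rewrite [n + m]addrC; reflexivity. Qed.

Lemma brb_coef k l t : (brb k l)@_t = cb k l * (idx k l == t)%:R.
Proof. by rewrite brbE mcoeffZ /bv mcoeffU. Qed.

Lemma idx_eq k l t : (idx k l == t) = (k == (addb t.1 l.1, t.2 - l.2)).
Proof.
case: k t => [b m] [c n]; rewrite /idx; cbn [fst snd]; rewrite !xpair_eqE.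
congr (_ && _).
  by case: b; case: c; case: l.1.
by apply/eqP/eqP => [<-|->]; rewrite ?addrK ?subrK.
Qed.

Lemma msupp_basis (l : SVidx) : msupp (<< l >> : SV) = [fset l]%fset.
Proof. by rewrite msuppU oner_eq0. Qed.

Lemma sum_coef (u : SV) (k0 : SVidx) (f : SVidx -> C) :
  (forall k, k != k0 -> f k = 0) ->
  \sum_(k <- msupp u) u@_k * f k = u@_k0 * f k0.
Proof.
move=> Hf.
transitivity (\sum_(k <- msupp u) (<< u@_k *g k >> : SV)@_k0 * f k0).
  apply: eq_bigr => k _; rewrite mcoeffU.
  case: eqP => [->|/eqP ne]; first by rewrite mulr1n.
  by rewrite Hf // mulr0 mulr0n mul0r.
by rewrite -mulr_suml -raddf_sum -monalgE.
Qed.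

Lemma mcoeff_sum (s : seq SVidx) (F : SVidx -> SV) t :
  (\sum_(k <- s) F k)@_t = \sum_(k <- s) (F k)@_t.
Proof.
elim: s => [|x s IH]; first by rewrite !big_nil mcoeff0.
by rewrite !big_cons mcoeffD IH.
Qed.
Lemma brR_coef (u : SV) l t :
  (br u (bv l))@_t = u@_(addb t.1 l.1, t.2 - l.2) * cb (addb t.1 l.1, t.2 - l.2) l.
Proof.
rewrite /br mcoeff_sum.
under eq_bigr => k _ do rewrite /bv msupp_basis big_seq_fset1 mcoeffZ mcoeffUU mulr1 brb_coef idx_eq.
rewrite (@sum_coef u (addb t.1 l.1, t.2 - l.2) (fun k => cb k l * (k == (addb t.1 l.1, t.2 - l.2))%:R)).
  by rewrite eqxx mulr1.
by move=> k /negbTE ->; rewrite mulr0.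
Qed.

Lemma idx_eq2 k l t : (idx l k == t) = (k == (addb t.1 l.1, t.2 - l.2)).
Proof.
case: k t => [b m] [c n]; rewrite /idx; cbn [fst snd]; rewrite !xpair_eqE.
congr (_ && _).
  by case: b; case: c; case: l.1.
apply/eqP/eqP => [<-|->]; first by rewrite addrAC subrr add0r.
by rewrite addrC subrK.
Qed.

Lemma brL_coef (u : SV) l t :
  (br (bv l) u)@_t = u@_(addb t.1 l.1, t.2 - l.2) * cb l (addb t.1 l.1, t.2 - l.2).
Proof.
rewrite /br /bv msupp_basis big_seq_fset1 mcoeff_sum.
under eq_bigr => k _ do rewrite mcoeffZ mcoeffUU mul1r brb_coef idx_eq2.
rewrite (@sum_coef u (addb t.1 l.1, t.2 - l.2) (fun k => cb l k * (k == (addb t.1 l.1, t.2 - l.2))%:R)).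
  by rewrite eqxx mulr1.
by move=> k /negbTE ->; rewrite mulr0.
Qed.

Lemma br_bv k l : br (bv k) (bv l) = brb k l.
Proof.
rewrite /br /bv !msupp_basis !big_seq_fset1 !mcoeffUU mulr1 scale1r //.
Qed.

Lemma key (D : {linear SV -> SV}) (sg : C) k l t :
  D (br (bv k) (bv l)) = br (D (bv k)) (bv l) + sg *: br (bv k) (D (bv l)) ->
  cb k l * (D (bv (idx k l)))@_t =
  (D (bv k))@_(addb t.1 l.1, t.2 - l.2) * cb (addb t.1 l.1, t.2 - l.2) l +
  sg * ((D (bv l))@_(addb t.1 k.1, t.2 - k.2) * cb k (addb t.1 k.1, t.2 - k.2)).
Proof.
rewrite br_bv brbE linearZ => H.
have := congr1 (mcoeff t) H.
by rewrite mcoeffZ mcoeffD mcoeffZ brR_coef brL_coef.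
Qed.

Lemma hom_bv k : homog k.1 (bv k).
Proof. by move=> k' ne; rewrite /bv mcoeffU; case: eqP => // E; rewrite -E eqxx in ne. Qed.

Lemma sgn0 b : (-1) ^+ (false && b) = 1 :> C. Proof. by rewrite andFb expr0. Qed.
Lemma sgn1 : (-1) ^+ (true && false) = 1 :> C. Proof. by rewrite andbF expr0. Qed.

Lemma expand2 (D0 D1 : {linear SV -> SV}) (x y : SV) (c : C) t :
  (D0 (x + c *: y) + D1 (x + c *: y))@_t =
  (D0 x)@_t + c * (D0 y)@_t + ((D1 x)@_t + c * (D1 y)@_t).
Proof.
rewrite (linearD D0) (linearD D1) (linearZ_LR D0) (linearZ_LR D1).
apply: etrans (mcoeffD _ _ _) _.
congr (_ + _); apply: etrans (mcoeffD _ _ _) _; congr (_ + _); exact: mcoeffZ.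
Qed.

Theorem lemma4p2 (Delta : {linear SV -> SV}) (a : complex Rdefinitions.R) :
  local_derivation Delta ->
  Delta (Lb 1) = 0 ->
  Delta (Gb 1) = a *: Gb 1 ->
  Delta (Gb 1) = 0.
Proof.
move=> Hloc HL HG.
pose lam : C := 'i / 2%:R.
have [D [[D0 [D1 [H0 [H1 HD]]]] HDx]] := Hloc (Lb 1 + lam *: Gb 1).
rewrite linearD linearZ_LR HL HG add0r scalerA HD in HDx.
have E1 := @key _ _ _ _ (false, 1) (H0.2 _ _ _ _ (hom_bv (false,1)) (hom_bv (false,0))).
have E2 := @key _ _ _ _ (false, 0) (H0.2 _ _ _ _ (hom_bv (true,0)) (hom_bv (true,0))).
have E3 := @key _ _ _ _ (false, 1) (H0.2 _ _ _ _ (hom_bv (true,1)) (hom_bv (true,0))).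
have O1 := @key _ _ _ _ (false, 1) (H1.2 _ _ _ _ (hom_bv (false,0)) (hom_bv (true,1))).
have O2 := @key _ _ _ _ (true, 0) (H1.2 _ _ _ _ (hom_bv (false,1)) (hom_bv (false,-1))).
have O3 := @key _ _ _ _ (false, 0) (H1.2 _ _ _ _ (hom_bv (false,-1)) (hom_bv (true,1))).
have O4 := @key _ _ _ _ (false, 1) (H1.2 _ _ _ _ (hom_bv (false,1)) (hom_bv (true,0))).
rewrite ?sgn0 ?sgn1 in E1 E2 E3 O1 O2 O3 O4.
pose a0 := (D0 (bv (false,0)))@_(false,0).
pose a1 := (D0 (bv (false,1)))@_(false,1).
pose b0 := (D0 (bv (true,0)))@_(true,0).
pose b1 := (D0 (bv (true,1)))@_(true,1).
pose g0 := (D1 (bv (false,0)))@_(true,0).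
pose g1 := (D1 (bv (false,1)))@_(true,1).
pose gm := (D1 (bv (false,-1)))@_(true,-1).
pose d0 := (D1 (bv (true,0)))@_(false,0).
pose d1 := (D1 (bv (true,1)))@_(false,1).
have e1 : cb (false,1) (false,0) * a1 = a1 * cb (false,1) (false,0) + 1 * (a0 * cb (false,1) (false,0)) := E1.
have e2 : cb (true,0) (true,0) * a0 = b0 * cb (true,0) (true,0) + 1 * (b0 * cb (true,0) (true,0)) := E2.
have e3 : cb (true,1) (true,0) * a1 = b1 * cb (true,1) (true,0) + 1 * (b0 * cb (true,1) (true,0)) := E3.
have o1 : cb (false,0) (true,1) * d1 = g0 * cb (true,0) (true,1) + 1 * (d1 * cb (false,0) (false,1)) := O1.
have o2 : cb (false,1) (false,-1) * g0 = g1 * cb (true,1) (false,-1) + 1 * (gm * cb (false,1) (true,-1)) := O2.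
have o3 : cb (false,-1) (true,1) * d0 = gm * cb (true,-1) (true,1) + 1 * (d1 * cb (false,-1) (false,1)) := O3.
have o4 : cb (false,1) (true,0) * d1 = g1 * cb (true,1) (true,0) + 1 * (d0 * cb (false,1) (false,0)) := O4.
have zG : (Gb 1)@_(false,1) = 0 := hom_bv (true,1) (false,1) isT.
have oG : (Gb 1)@_(true,1) = 1 := mcoeffUU _ _.
have zA1 : (D0 (Gb 1))@_(false,1) = 0 := H0.1 _ _ (hom_bv (true,1)) (false,1) isT.
have zA2 : (D1 (Lb 1))@_(false,1) = 0 := H1.1 _ _ (hom_bv (false,1)) (false,1) isT.
have zB1 : (D0 (Lb 1))@_(true,1) = 0 := H0.1 _ _ (hom_bv (false,1)) (true,1) isT.
have zB2 : (D1 (Gb 1))@_(true,1) = 0 := H1.1 _ _ (hom_bv (true,1)) (true,1) isT.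
have hA' := etrans (esym (mcoeffZ _ _ _)) (etrans (congr1 (fun v : SV => v@_(false,1)) HDx) (expand2 D0 D1 (Lb 1) (Gb 1) lam (false,1))).
have hB' := etrans (esym (mcoeffZ _ _ _)) (etrans (congr1 (fun v : SV => v@_(true,1)) HDx) (expand2 D0 D1 (Lb 1) (Gb 1) lam (true,1))).
rewrite zG zA1 zA2 in hA'.
rewrite oG zB1 zB2 in hB'.
have hA : 0 = a1 + lam * 0 + (0 + lam * d1) := etrans (esym (mulr0 _)) hA'.
have hB : lam * a = 0 + lam * b1 + (g1 + lam * 0) := etrans (esym (mulr1 _)) hB'.
clear E1 E2 E3 O1 O2 O3 O4 hA' hB' HDx zG oG zA1 zA2 zB1 zB2.
clearbody a0 a1 b0 b1 g0 g1 gm d0 d1.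
have c1 : cb (false,1) (false,0) = 1 by rewrite /cb; ring.
have c2 : cb (true,0) (true,0) = 2%:R by [].
have c3 : cb (true,1) (true,0) = 2%:R by [].
have c4 : cb (false,0) (true,1) = -1 by rewrite /cb /halfz; field.
have c5 : cb (true,0) (true,1) = 2%:R by [].
have c6 : cb (false,0) (false,1) = -1 by rewrite /cb; ring.
have c7 : cb (false,1) (false,-1) = 2%:R by rewrite /cb; ring.
have c8 : cb (true,1) (false,-1) = 3%:R / 2%:R by rewrite /cb /halfz; field.
have c9 : cb (false,1) (true,-1) = 3%:R / 2%:R by rewrite /cb /halfz; field.
have c10 : cb (false,-1) (true,1) = - (3%:R / 2%:R) by rewrite /cb /halfz; field.
have c11 : cb (true,-1) (true,1) = 2%:R by [].
have c12 : cb (false,-1) (false,1) = - 2%:R by rewrite /cb; ring.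
have c13 : cb (false,1) (true,0) = 1 / 2%:R by rewrite /cb /halfz; field.
rewrite c1 in e1 o4. rewrite c2 in e2. rewrite c3 in e3 o4. rewrite c4 c5 c6 in o1.
rewrite c7 c8 c9 in o2. rewrite c10 c11 c12 in o3. rewrite c13 in o4.
clear c1 c2 c3 c4 c5 c6 c7 c8 c9 c10 c11 c12 c13.
have Z1 : 1 * a1 - (a1 * 1 + 1 * (a0 * 1)) = 0 by rewrite e1 subrr.
have Z2 : 2 * a0 - (b0 * 2 + 1 * (b0 * 2)) = 0 by rewrite e2 subrr.
have Z3 : 2 * a1 - (b1 * 2 + 1 * (b0 * 2)) = 0 by rewrite e3 subrr.
have Z4 : -1 * d1 - (g0 * 2 + 1 * (d1 * -1)) = 0 by rewrite o1 subrr.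
have Z5 : 2 * g0 - (g1 * (3 / 2) + 1 * (gm * (3 / 2))) = 0 by rewrite o2 subrr.
have Z6 : - (3 / 2) * d0 - (gm * 2 + 1 * (d1 * -2)) = 0 by rewrite o3 subrr.
have Z7 : 1 / 2 * d1 - (g1 * 2 + 1 * (d0 * 1)) = 0 by rewrite o4 subrr.
have Z8 : 0 - (a1 + lam * 0 + (0 + lam * d1)) = 0 by rewrite -hA subrr.
have Z9 : lam * a - (0 + lam * b1 + (g1 + lam * 0)) = 0 by rewrite -hB subrr.
have Zq : 4 * lam ^+ 2 + 1 = 0.
  by rewrite /lam expr_div_n sqrCi; field.
have Kid : lam * a =
  (lam * a - (0 + lam * b1 + (g1 + lam * 0)))
  + ((- (3 / 2) * d0 - (gm * 2 + 1 * (d1 * -2)))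
     - 3 / 2 * (1 / 2 * d1 - (g1 * 2 + 1 * (d0 * 1)))
     - 4 / 3 * (-1 * d1 - (g0 * 2 + 1 * (d1 * -1)))
     - 4 / 3 * (2 * g0 - (g1 * (3 / 2) + 1 * (gm * (3 / 2))))) / 5
  - (4 * lam ^+ 2 + 1) * d1 / 4
  + lam * (- (0 - (a1 + lam * 0 + (0 + lam * d1)))
           + (2 * (1 * a1 - (a1 * 1 + 1 * (a0 * 1))) + (2 * a0 - (b0 * 2 + 1 * (b0 * 2)))) / 4
           - (2 * a1 - (b1 * 2 + 1 * (b0 * 2))) / 2).
  by clearbody lam; field.
rewrite Z1 Z2 Z3 Z4 Z5 Z6 Z7 Z8 Z9 Zq in Kid.
have Ka : lam * a = 0 by rewrite Kid; field.
have lam0 : lam != 0 by rewrite /lam mulf_neq0 ?neq0Ci // invr_neq0 // pnatr_eq0.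
move/eqP: Ka; rewrite mulf_eq0 (negbTE lam0) /= => /eqP a0'.
by rewrite HG a0' scale0r.
Qed.
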